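(* Let $A\in\mathbb{R}^{n\times n}$, $B\in\mathbb{R}^{n\times m}$, $\bar T>0$, let $\tilde B\in\mathbb{C}^{r\times m}$ be fixed and let $D=\operatorname{diag}(\lambda_1,\ldots,\lambda_r)$, with $\lambda_i+\lambda_j\neq 0$ for all $i,j$ and $\lambda_i\notin\Lambda(-A)$ for all $i$. Let $\tilde P_{\bar T}=\tilde P_{\bar T}(\lambda_1,\dots,\lambda_r)$ and $\tilde P_{2,\bar T}=\tilde P_{2,\bar T}(\lambda_1,\dots,\lambda_r)$ be the solutions of $$A \tilde P_{2, {\bar T}}+ \tilde P_{2, {\bar T}} D =-B \tilde B^T+e^{A \bar T}B \tilde B^T e^{D \bar T},\qquad D\tilde P_{\bar T}+\tilde P_{\bar T} D =-\tilde B \tilde B^T+e^{D \bar T}\tilde B \tilde B^T e^{D \bar T}.$$ Then for each $i\in\{1,\dots,r\}$ the partial derivatives $X^{(i)}:=\partial_{\lambda_i} \tilde P_{\bar T}$ and $X_2^{(i)}:=\partial_{\lambda_i} \tilde P_{2, \bar T}$ solve $$DX^{(i)}+X^{(i)} D =-e_ie_i^T\tilde P_{\bar T}-\tilde P_{\bar T}e_ie_i^T+\bar T e_ie_i^Te^{D \bar T}\tilde B \tilde B^T e^{D \bar T}+\bar Te^{D \bar T}\tilde B \tilde B^T e^{D \bar T}e_ie_i^T,$$ $$A X_2^{(i)}+ X_2^{(i)} D =-\tilde P_{2, {\bar T}} e_ie_i^T+\bar T e^{A \bar T}B \tilde B^T e^{D \bar T}e_ie_i^T,$$ respectively.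
   Context: $e_i$ denotes the $i$-th column of the identity matrix of appropriate size. $\Lambda(A)$ is the spectrum of $A$. In the paper's setting $D$ arises from a diagonalization $\hat A=S^{-1}DS$ of a reduced matrix $\hat A$ and $\tilde B=S\hat B$; the derivatives are taken with respect to the eigenvalues $\lambda_i$ with $\tilde B$ held fixed. *)

(* Defs.v *)
From HB Require Import structures.
From mathcomp Require Import all_boot all_order all_algebra.
From mathcomp Require Import complex.
From mathcomp Require Import all_classical all_reals all_analysis.
Set Implicit Arguments. Unset Strict Implicit. Unset Printing Implicit Defensive.
Import Order.TTheory GRing.Theory Num.Theory.
Import numFieldNormedType.Exports.
Local Open Scope ring_scope.
Local Open Scope complex_scope.

Definition expmx (K : numFieldType) (n : nat) (M : 'M[K]_n) : 'M[K]_n :=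
  limn (series (fun k : nat => (k`!%:R)^-1 *: M ^+ k)).

Definition cmx (R : rcfType) (p q : nat) (M : 'M[R]_(p, q)) : 'M[R[i]]_(p, q) :=
  map_mx (fun x : R => x%:C) M.

(* Main.v *)
Require Import Defs.
From HB Require Import structures.
From mathcomp Require Import all_boot all_order all_algebra.
From mathcomp Require Import complex.
From mathcomp Require Import all_classical all_reals all_analysis.
From mathcomp Require Import ring lra.
Import Order.TTheory GRing.Theory Num.Theory.
Import numFieldNormedType.Exports.
Local Open Scope ring_scope.
Local Open Scope complex_scope.

Section Gen.
Local Open Scope classical_set_scope.
Context {K : numFieldType}.

Lemma cvg_mx_entry {T : Type} {F : set_system T} {FF : Filter F} (m n : nat)
  (f : T -> 'M[K]_(m, n)) (L : 'M[K]_(m, n)) :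
  (forall i j, (fun x => f x i j) @ F --> L i j) -> f @ F --> L.
Proof.
move=> H; apply/cvgrPdist_lt => e e0.
have : \forall x \near F, forall ij : 'I_m * 'I_n, `|L ij.1 ij.2 - f x ij.1 ij.2| < e.
  apply: filter_forall => -[i j] /=.
  by move: (H i j) => /cvgrPdist_lt /(_ e e0).
apply: filterS => x Hx.
have : ball L e (f x).
  split => // i j; rewrite -ball_normE /ball_ /=.
  exact: (Hx (i, j)).
by rewrite -ball_normE.
Qed.

Lemma cvg_bigsum {T : Type} {F : set_system T} {FF : Filter F} (I : Type)
  (s : seq I) (P : pred I) (g : I -> T -> K) (l : I -> K) :
  (forall i, g i @ F --> l i) ->
  (fun x => \sum_(i <- s | P i) g i x) @ F --> \sum_(i <- s | P i) l i.
Proof.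
move=> H; elim: s => [|a s IH].
  under eq_fun do rewrite big_nil. rewrite big_nil; exact: cvg_cst.
under eq_fun do rewrite big_cons. rewrite big_cons.
case: (P a) => //. exact: cvgD.
Qed.

Lemma cvg_bigprod {T : Type} {F : set_system T} {FF : Filter F} (I : Type)
  (s : seq I) (P : pred I) (g : I -> T -> K) (l : I -> K) :
  (forall i, g i @ F --> l i) ->
  (fun x => \prod_(i <- s | P i) g i x) @ F --> \prod_(i <- s | P i) l i.
Proof.
move=> H; elim: s => [|a s IH].
  under eq_fun do rewrite big_nil. rewrite big_nil; exact: cvg_cst.
under eq_fun do rewrite big_cons. rewrite big_cons.
case: (P a) => //. exact: cvgM.
Qed.

Lemma cvg_det {T : Type} {F : set_system T} {FF : Filter F} (n : nat)
  (f : T -> 'M[K]_n) (L : 'M[K]_n) :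
  (forall i j, (fun x => f x i j) @ F --> L i j) ->
  (fun x => \det (f x)) @ F --> \det L.
Proof.
move=> H; rewrite /determinant.
apply: cvg_bigsum => s; apply: cvgM; first exact: cvg_cst.
by apply: cvg_bigprod => i; apply: H.
Qed.

Lemma cvg_cofactor {T : Type} {F : set_system T} {FF : Filter F} (n : nat)
  (f : T -> 'M[K]_n) (L : 'M[K]_n) i j :
  (forall i j, (fun x => f x i j) @ F --> L i j) ->
  (fun x => cofactor (f x) i j) @ F --> cofactor L i j.
Proof.
move=> H; rewrite /cofactor; apply: cvgM; first exact: cvg_cst.
apply: cvg_det => a b; rewrite mxE mxE.
under eq_fun do rewrite !mxE. exact: H.
Qed.

Lemma near_neq0 {T : Type} {F : set_system T} {FF : Filter F}
  {g : T -> K} {l : K} : g @ F --> l -> l != 0 -> \forall x \near F, g x != 0.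
Proof.
move=> /cvgrPdist_lt H l0.
have := H `|l|; rewrite normr_gt0 => /(_ l0).
apply: filterS => x Hx; apply/eqP => gx0; move: Hx; rewrite gx0 subr0.
by rewrite ltxx.
Qed.

End Gen.

Section CC.
Local Open Scope classical_set_scope.
Context {R : realType}.
Local Notation C := (Num.NumField.sort (R[i] : numFieldType)).

Definition normc (z : C) : R := Num.sqrt (complex.Re z ^+ 2 + complex.Im z ^+ 2).

Lemma normCE (z : C) : `|z| = (normc z)%:C.
Proof. by rewrite normc_def. Qed.

Lemma normc_ge0 (z : C) : 0 <= normc z.
Proof. exact: sqrtr_ge0. Qed.

Lemma normcM (x y : C) : normc (x * y) = normc x * normc y.
Proof. by have := normrM x y; rewrite !normCE -rmorphM => /complexI. Qed.


Lemma normcD (x y : C) : normc (x + y) <= normc x + normc y.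
Proof. by have := ler_normD x y; rewrite !normCE -rmorphD lecR. Qed.

Lemma normcN (x : C) : normc (- x) = normc x.
Proof. by have := normrN x; rewrite !normCE => /complexI. Qed.

Lemma normcR (x : R) : normc x%:C = `|x|.
Proof. by rewrite /normc /= expr0n addr0 sqrtr_sqr. Qed.

Lemma normcX (x : C) k : normc (x ^+ k) = normc x ^+ k.
Proof. by elim: k => [|k IH]; rewrite ?expr0 ?exprS ?normcM ?IH // normcR normr1. Qed.

Lemma posC {e : C} : 0 < e -> e = (complex.Re e)%:C /\ 0 < complex.Re e.
Proof.
case: e => a b; rewrite ltcE /= => /andP[/eqP -> ha]; split => //.
Qed.

Lemma normcB (x y : C) : normc (x - y) = normc (y - x).
Proof. by rewrite -normcN opprB. Qed.

Lemma cvgC_normc {T : Type} {F : set_system T} {FF : Filter F}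
  (u : T -> C) (l : C) :
  (fun x => normc (u x - l)) @ F --> (0:R) -> u @ F --> l.
Proof.
move=> /cvgrPdist_lt H; apply/cvgrPdist_lt => e e0.
have [-> he] := posC e0.
apply: filterS (H _ he) => x; rewrite sub0r normrN ger0_norm ?normc_ge0//.
by rewrite normCE ltcR normcB.
Qed.

Lemma normc_Re (z : C) : `|complex.Re z| <= normc z.
Proof.
rewrite /normc; case: z => a b /=; rewrite -sqrtr_sqr ler_sqrt ?addr_ge0 ?sqr_ge0 //.
by rewrite lerDl sqr_ge0.
Qed.

Lemma normc_Im (z : C) : `|complex.Im z| <= normc z.
Proof.
rewrite /normc; case: z => a b /=; rewrite -sqrtr_sqr ler_sqrt ?addr_ge0 ?sqr_ge0 //.
by rewrite lerDr sqr_ge0.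
Qed.

Lemma normc_le_ReIm (z : C) : normc z <= `|complex.Re z| + `|complex.Im z|.
Proof.
rewrite /normc; case: z => a b /=.
rewrite -[X in _ <= X]ger0_norm ?addr_ge0// -sqrtr_sqr ler_sqrt ?sqr_ge0//.
rewrite sqrrD !real_normK ?num_real// -addrA lerD2l lerDr.
by rewrite mulrn_wge0// mulr_ge0.
Qed.

Lemma cvgC_ReIm {T : Type} {F : set_system T} {FF : Filter F}
  (u : T -> C) (a b : R) :
  (fun x => complex.Re (u x)) @ F --> a -> (fun x => complex.Im (u x)) @ F --> b ->
  u @ F --> ((a +i* b) : C).
Proof.
move=> /cvgrPdist_lt Ha /cvgrPdist_lt Hb; apply: cvgC_normc.
apply/cvgrPdist_lt => e e0.
have e20 : 0 < e / 2 by rewrite divr_gt0.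
apply: filterS2 (Ha _ e20) (Hb _ e20) => x h1 h2.
rewrite sub0r normrN ger0_norm ?normc_ge0//.
apply: le_lt_trans (normc_le_ReIm _) _.
rewrite (splitr e); apply: ltrD.
  by move: h1; rewrite -normrN opprB; case: (u x).
by move: h2; rewrite -normrN opprB; case: (u x).
Qed.

End CC.

Section CExp.
Local Open Scope classical_set_scope.
Context {R : realType}.
Local Notation C := (Num.NumField.sort (R[i] : numFieldType)).

Definition cterm (z : C) (k : nat) : C := (k`!%:R)^-1 * z ^+ k.
Definition cexp (z : C) : C := limn (series (cterm z)).

Lemma ctermE (z : C) k : cterm z k = ((k`!%:R : R)^-1)%:C * z ^+ k.
Proof. by rewrite /cterm fmorphV rmorph_nat. Qed.

Lemma normc_cterm (z : C) k : normc (cterm z k) = exp_coeff (normc z) k.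
Proof.
by rewrite ctermE normcM normcR normcX /exp_coeff /= mulrC ger0_norm.
Qed.

Lemma ReD (x y : C) : complex.Re (x + y) = complex.Re x + complex.Re y.
Proof. by case: x; case: y. Qed.
Lemma ImD (x y : C) : complex.Im (x + y) = complex.Im x + complex.Im y.
Proof. by case: x; case: y. Qed.

Lemma Re_sum (s : seq nat) (f : nat -> C) :
  complex.Re (\sum_(i <- s) f i) = \sum_(i <- s) complex.Re (f i).
Proof. by elim: s => [|a s IH]; rewrite ?big_nil ?big_cons // ReD IH. Qed.
Lemma Im_sum (s : seq nat) (f : nat -> C) :
  complex.Im (\sum_(i <- s) f i) = \sum_(i <- s) complex.Im (f i).
Proof. by elim: s => [|a s IH]; rewrite ?big_nil ?big_cons // ImD IH. Qed.

Lemma cvg_Re_series (z : C) : cvgn (series (fun k => complex.Re (cterm z k))).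
Proof.
apply: (@normed_cvg _ R^o).
rewrite /normed_series_of /=; apply: (@series_le_cvg _ _ (exp_coeff (normc z))).
- by move=> n.
- by move=> n; apply: exp_coeff_ge0; apply: normc_ge0.
- by move=> n /=; rewrite -normc_cterm; apply: normc_Re.
- exact: is_cvg_series_exp_coeff.
Qed.

Lemma cvg_Im_series (z : C) : cvgn (series (fun k => complex.Im (cterm z k))).
Proof.
apply: (@normed_cvg _ R^o).
rewrite /normed_series_of /=; apply: (@series_le_cvg _ _ (exp_coeff (normc z))).
- by move=> n.
- by move=> n; apply: exp_coeff_ge0; apply: normc_ge0.
- by move=> n /=; rewrite -normc_cterm; apply: normc_Im.
- exact: is_cvg_series_exp_coeff.
Qed.

Lemma cexp_cvg (z : C) : series (cterm z) @ \oo --> cexp z.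
Proof.
suff H : series (cterm z) @ \oo -->
   ((limn (series (fun k => complex.Re (cterm z k))) +i*
     limn (series (fun k => complex.Im (cterm z k)))) : C).
  by rewrite /cexp (cvg_lim _ H).
apply: cvgC_ReIm.
- apply: cvg_trans (cvg_Re_series z).
  by apply: near_eq_cvg; near=> n; rewrite /series /= Re_sum.
- apply: cvg_trans (cvg_Im_series z).
  by apply: near_eq_cvg; near=> n; rewrite /series /= Im_sum.
Unshelve. all: by end_near. Qed.

End CExp.

Section CQuad.
Local Open Scope classical_set_scope.
Context {R : realType}.
Local Notation C := (Num.NumField.sort (R[i] : numFieldType)).

Lemma normc_nat k : normc (k%:R : C) = k%:R.
Proof. by rewrite -(rmorph_nat (real_complex R)) normcR ger0_norm. Qed.

Definition dterm (w u : C) k : C := (w + u) ^+ k - w ^+ k - k%:R * u * w ^+ k.-1.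

Lemma dterm_rec w u k :
  dterm w u k.+1 = (w + u) * dterm w u k + k%:R * u ^+ 2 * w ^+ k.-1.
Proof.
rewrite /dterm; case: k => [|k] /=.
  by rewrite !expr0 expr1 !mul0r; ring.
rewrite !exprS; ring.
Qed.

Lemma dterm_bound w u k : normc u <= 1 ->
  normc (dterm w u k) <= normc u ^+ 2 * (k ^ 2)%:R * (normc w + 1) ^+ k.
Proof.
move=> hu; set b := normc w + 1.
have hw0 := normc_ge0 w; have hu0 := normc_ge0 u.
have b1 : 1 <= b by rewrite /b lerDr.
elim: k => [|k IH].
  rewrite /dterm !expr0 subrr !mul0r subr0 -[0 : C](rmorph0 (real_complex R)).
  by rewrite normcR normr0 mulr0 mul0r.
rewrite dterm_rec.
apply: le_trans (normcD _ _) _.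
rewrite !normcM !normcX normc_nat.
have hwu : normc (w + u) <= b by apply: le_trans (normcD _ _) _; rewrite lerD2l.
have hwk : normc w ^+ k.-1 <= b ^+ k.+1.
  apply: le_trans (_ : b ^+ k.-1 <= _).
    apply: (lerXn2r k.-1); rewrite ?nnegrE //; last by rewrite /b lerDl.
    exact: le_trans ler01 b1.
  by apply: ler_weXn2l => //; case: k {IH} => //= k; rewrite ltnW.
have d0 := normc_ge0 (dterm w u k).
have X0 : 0 <= b ^+ k by rewrite exprn_ge0 // (le_trans _ b1).
have W0 : 0 <= normc w ^+ k.-1 by rewrite exprn_ge0.
rewrite [(k.+1 ^ 2)%:R]natrX [(k ^ 2)%:R]natrX in IH *.
rewrite -natr1 (exprS b k).
set X := b ^+ k in IH X0 hwk *; set W := normc w ^+ k.-1 in hwk W0 *.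
set U := normc u in hu0 hu IH *; set D := normc (dterm w u k) in IH d0 *.
set c := normc (w + u) in hwu *.
have k0 : 0 <= (k%:R : R) by rewrite ler0n.
rewrite exprS in hwk.
set kk := (k%:R : R) in k0 IH *.
have b0 : 0 <= b by exact: le_trans ler01 b1.
have h1 : c * D <= b * (U ^+ 2 * kk ^+ 2 * X).
  apply: le_trans (ler_wpM2r d0 hwu) _; by rewrite ler_pM2l // (lt_le_trans ltr01 b1).
have h2 : kk * (U * U) * W <= kk * (U * U) * (b * X).
  by apply: ler_wpM2l hwk; rewrite !mulr_ge0.
have P0 : 0 <= U ^+ 2 * (b * X) by rewrite mulr_ge0 ?exprn_ge0 // mulr_ge0.
apply: le_trans (lerD h1 h2) _.
have -> : b * (U ^+ 2 * kk ^+ 2 * X) + kk * (U * U) * (b * X) =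
  (U ^+ 2 * (b * X)) * (kk ^+ 2 + kk) by ring.
have -> : U ^+ 2 * (kk + 1) ^+ 2 * (b * X) =
  (U ^+ 2 * (b * X)) * (kk ^+ 2 + kk + (kk + 1)) by ring.
by rewrite ler_wpM2l // lerDl addr_ge0.
Qed.


Lemma normc_sum (I : Type) (s : seq I) (f : I -> C) :
  normc (\sum_(i <- s) f i) <= \sum_(i <- s) normc (f i).
Proof.
elim: s => [|a s IH]; rewrite ?big_nil ?big_cons.
  by rewrite -[0 : C](rmorph0 (real_complex R)) normcR normr0.
by apply: le_trans (normcD _ _) _; rewrite lerD2l.
Qed.

Lemma normc_lim_le {T : Type} {F : set_system T} {PF : ProperFilter F}
  (v : T -> C) (L : C) (c : R) :
  v @ F --> L -> (forall x, normc (v x) <= c) -> normc L <= c.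
Proof.
move=> /cvgrPdist_lt H hc; apply/ler_addgt0Pr => e e0.
have e0' : 0 < (e%:C : C) by rewrite ltcR.
have [x hx] := filter_ex (H _ e0').
rewrite normCE ltcR in hx.
have -> : L = (L - v x) + v x by rewrite subrK.
apply: le_trans (normcD _ _) _; rewrite addrC; apply: lerD => //.
exact: ltW.
Qed.

Lemma sum_dterm (w u : C) N :
  \sum_(k < N) (k`!%:R)^-1 * dterm w u k =
  series (cterm (w + u)) N - series (cterm w) N
  - u * \sum_(k < N) (k`!%:R)^-1 * (k%:R * w ^+ k.-1).
Proof.
rewrite /series /= !big_mkord mulr_sumr -!sumrB; apply: eq_bigr => k _.
rewrite /cterm /dterm; ring.
Qed.

Lemma sum_deriv (w : C) N :
  \sum_(k < N.+1) (k`!%:R)^-1 * (k%:R * w ^+ k.-1) = series (cterm w) N.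
Proof.
rewrite big_ord_recl /= mul0r mulr0 add0r /series /= big_mkord.
apply: eq_bigr => i _; rewrite /cterm /bump /= factS natrM.
have h1 : (i.+1%:R : C) != 0 by rewrite pnatr_eq0.
have h2 : (i`!%:R : C) != 0 by rewrite pnatr_eq0 -lt0n fact_gt0.
by rewrite add1n add0n invfM mulrACA mulVf // mul1r.
Qed.

Lemma nat_sq_le k : (k ^ 2 <= 4 ^ k)%N.
Proof.
have h := ltnW (ltn_expl k (isT : (1 < 2)%N)).
have -> : (4 ^ k = (2 ^ k) ^ 2)%N by rewrite -expnM mulnC expnM.
by rewrite leq_exp2r.
Qed.

Lemma sum_bound (w u : C) N : normc u <= 1 ->
  normc (\sum_(k < N) (k`!%:R)^-1 * dterm w u k)
  <= normc u ^+ 2 * expR (4 * (normc w + 1)).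
Proof.
move=> hu; set b := normc w + 1.
have b0 : 0 <= b by rewrite addr_ge0 ?normc_ge0.
apply: le_trans; first exact: normc_sum.
apply: le_trans (_ : \sum_(k < N) normc u ^+ 2 * exp_coeff (4 * b) k <= _).
  apply: ler_sum => k _.
  rewrite normcM -(rmorph_nat (real_complex R)) -fmorphV normcR.
  rewrite ger0_norm ?invr_ge0 ?ler0n //.
  apply: le_trans (_ : k`!%:R^-1 * (normc u ^+ 2 * (k ^ 2)%:R * b ^+ k) <= _).
    by apply: ler_wpM2l; [rewrite invr_ge0 ler0n | exact: dterm_bound].
  rewrite /exp_coeff /=.
  rewrite [X in X <= _](_ : _ = normc u ^+ 2 * (k`!%:R^-1 * ((k ^ 2)%:R * b ^+ k))); last by ring.
  rewrite [X in _ <= X](_ : _ = normc u ^+ 2 * (k`!%:R^-1 * (4 * b) ^+ k)); last by ring.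
  apply: ler_wpM2l; first by rewrite exprn_ge0 // normc_ge0.
  apply: ler_wpM2l; first by rewrite invr_ge0 ler0n.
  rewrite exprMn ler_wpM2r ?exprn_ge0 //.
  by rewrite -(natrX _ 4) ler_nat nat_sq_le.
rewrite -mulr_sumr ler_wpM2l ?exprn_ge0 ?normc_ge0 //.
have := @nondecreasing_cvgn_le _ (series (exp_coeff (4 * b))).
move=> /(_ _ (is_cvg_series_exp_coeff _) N).
rewrite /series /= big_mkord; apply.
apply: nondecreasing_series => n _ _; apply: exp_coeff_ge0.
by rewrite mulr_ge0.
Qed.

Lemma cexp_quad (w u : C) : normc u <= 1 ->
  normc (cexp (w + u) - cexp w - u * cexp w)
  <= normc u ^+ 2 * expR (4 * (normc w + 1)).
Proof.
move=> hu.
apply: (@normc_lim_le _ (\oo) _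
  (fun N => \sum_(k < N.+1) (k`!%:R)^-1 * dterm w u k)); last first.
  by move=> N; apply: sum_bound.
under eq_fun do rewrite sum_dterm sum_deriv.
apply: cvgB; last by apply: cvgM; [exact: cvg_cst | exact: cexp_cvg].
apply: cvgB.
  by have := cexp_cvg (w + u); rewrite -cvg_shiftS.
by have := cexp_cvg w; rewrite -cvg_shiftS.
Qed.

End CQuad.

Section CDer.
Local Open Scope classical_set_scope.
Context {R : realType}.
Local Notation C := (Num.NumField.sort (R[i] : numFieldType)).

Lemma normcV (x : C) : normc (x^-1) = (normc x)^-1.
Proof. by have := normfV x; rewrite !normCE -fmorphV => /complexI. Qed.

Lemma normc_cvg0 : (fun h : C => normc h) @ (0 : C)^' --> (0 : R).
Proof.
apply/cvgrPdist_lt => e e0.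
have e0' : 0 < (e%:C : C) by rewrite ltcR.
apply: filterS (dnbhs0_lt e0') => x.
by rewrite normCE ltcR sub0r normrN ger0_norm // normc_ge0.
Qed.

Lemma cexp_deriv (w c : C) :
  (fun h : C => h^-1 * (cexp (w + h * c) - cexp w)) @ (0 : C)^' --> c * cexp w.
Proof.
apply: cvgC_normc.
set K := expR (4 * (normc w + 1)).
apply: (@squeeze_cvgr _ _ _ _ (fun=> 0) (fun h => normc h * (normc c ^+ 2 * K))).
- have hb : \forall h \near (0 : C)^', normc h * normc c < 1.
    have := normc_cvg0; move=> /cvgrPdist_lt /(_ (normc c + 1)^-1).
    rewrite invr_gt0 ltr_pwDr ?ltr01 ?normc_ge0// => /(_ isT).
    apply: filterS => h; rewrite sub0r normrN ger0_norm ?normc_ge0 // => hh.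
    have c1 : 0 < normc c + 1 by rewrite ltr_pwDr ?ltr01 ?normc_ge0.
    apply: le_lt_trans (_ : normc h * (normc c + 1) < 1).
      by rewrite ler_wpM2l ?normc_ge0 // lerDl.
    by rewrite -ltr_pdivlMr // mul1r.
  apply: filterS2 hb (nbhs_dnbhs_neq (0 : C)) => h hb h0.
  rewrite normc_ge0 /=.
  have -> : h^-1 * (cexp (w + h * c) - cexp w) - c * cexp w =
      h^-1 * (cexp (w + h * c) - cexp w - h * c * cexp w).
    by rewrite [X in _ = X]mulrBr -[h * c * _]mulrA mulKf.
  rewrite normcM normcV.
  have hh0 : 0 < normc h.
    rewrite lt_def normc_ge0 andbT; apply/eqP => /(congr1 (real_complex R)).
    by rewrite -normCE => /eqP; rewrite normr_eq0 (negPf h0).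
  rewrite ler_pdivrMl //.
  apply: le_trans (cexp_quad w (h * c) _) _.
    by rewrite normcM ltW.
  by rewrite normcM exprMn /K expr2 -!mulrA.
- exact: cvg_cst.
- rewrite -[X in _ --> X](mul0r (normc c ^+ 2 * K)).
  exact: cvgMl normc_cvg0.
Qed.

End CDer.

Section Gen2.
Local Open Scope classical_set_scope.
Context {K : numFieldType}.

Lemma id_cvg0 : (fun h : K => h) @ (0 : K)^' --> (0 : K).
Proof.
apply/cvgrPdist_lt => e e0; apply: filterS (dnbhs0_lt e0) => x.
by rewrite sub0r normrN.
Qed.

Lemma der_cont (f : K -> K) (f0 L : K) :
  (fun h => h^-1 * (f h - f0)) @ (0 : K)^' --> L -> f @ (0 : K)^' --> f0.
Proof.
move=> H.
have H2 : (fun h => f0 + h * (h^-1 * (f h - f0))) @ (0 : K)^' --> f0 + 0 * L.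
  by apply: cvgD; [exact: cvg_cst | apply: cvgM => //; exact: id_cvg0].
rewrite mul0r addr0 in H2; apply: cvg_trans H2.
apply: near_eq_cvg; near=> h.
have h0 : h != 0 by near: h; exact: nbhs_dnbhs_neq.
by rewrite mulrA mulfV // mul1r addrC subrK.
Unshelve. all: by end_near. Qed.

Lemma der_mul (f g : K -> K) (f0 g0 Lf Lg : K) :
  (fun h => h^-1 * (f h - f0)) @ (0 : K)^' --> Lf ->
  (fun h => h^-1 * (g h - g0)) @ (0 : K)^' --> Lg ->
  (fun h => h^-1 * (f h * g h - f0 * g0)) @ (0 : K)^' --> Lf * g0 + f0 * Lg.
Proof.
move=> Hf Hg.
have Hg' := @der_cont g g0 Lg Hg.
have : (fun h => h^-1 * (f h - f0) * g h + f0 * (h^-1 * (g h - g0)))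
   @ (0 : K)^' --> Lf * g0 + f0 * Lg.
  by apply: cvgD; [apply: cvgM | apply: cvgM => //; exact: cvg_cst].
apply: cvg_trans; apply: near_eq_cvg; near=> h.
by rewrite /=; ring.
Unshelve. all: by end_near. Qed.

Lemma lim_solve (N q g : K -> K) (N0 g0 : K) :
  N @ (0 : K)^' --> N0 -> N0 != 0 -> g @ (0 : K)^' --> g0 ->
  (\forall h \near (0 : K)^', N h * q h = g h) ->
  q @ (0 : K)^' --> g0 / N0.
Proof.
move=> HN N00 Hg Heq.
have HNV : (fun h => (N h)^-1) @ (0 : K)^' --> N0^-1 by exact: cvgV.
have : (fun h => g h * (N h)^-1) @ (0 : K)^' --> g0 / N0 by apply: cvgM; [exact: Hg | exact: HNV].
apply: cvg_trans; apply: near_eq_cvg.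
have Nn0 : \forall x \near (0 : K)^', N x != 0 by exact: near_neq0 HN N00.
apply: filterS2 Heq Nn0 => h Hh Nh /=.
by rewrite -Hh mulrC mulKf.
Qed.

Lemma lim_solve_mx n (N : K -> 'M[K]_n) (q g : K -> 'cV[K]_n) (N0 : 'M[K]_n)
  (g0 : 'cV[K]_n) :
  (forall i j, (fun h => N h i j) @ (0 : K)^' --> N0 i j) -> \det N0 != 0 ->
  (forall i, (fun h => g h i 0) @ (0 : K)^' --> g0 i 0) ->
  (\forall h \near (0 : K)^', N h *m q h = g h) ->
  forall i, (fun h => q h i 0) @ (0 : K)^'
     --> ((\det N0)^-1 *: (\adj N0 *m g0)) i 0.
Proof.
move=> HN d0 Hg Heq i.
have Hd : (fun h => \det (N h)) @ (0 : K)^' --> \det N0 by exact: cvg_det.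
have dn : \forall x \near (0 : K)^', \det (N x) != 0 by exact: near_neq0 Hd d0.
have : (fun h => (\det (N h))^-1 * \sum_m (\adj (N h)) i m * g h m 0)
   @ (0 : K)^' --> ((\det N0)^-1 *: (\adj N0 *m g0)) i 0.
  rewrite !mxE; apply: cvgM; first exact: cvgV.
  apply: cvg_bigsum => m; apply: cvgM; last exact: Hg.
  rewrite mxE; under eq_fun do rewrite mxE.
  exact: cvg_cofactor.
apply: cvg_trans; apply: near_eq_cvg.
apply: filterS2 Heq dn => h Hh dh /=.
have : (\adj (N h) *m (N h *m q h)) i 0 = (\adj (N h) *m g h) i 0 by rewrite Hh.
rewrite mulmxA mul_adj_mx mul_scalar_mx mxE [in RHS]mxE => <-.
by rewrite mulKf.
Qed.

End Gen2.

Section MX.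
Local Open Scope classical_set_scope.
Context {R : realType}.
Local Notation C := (Num.NumField.sort (R[i] : numFieldType)).

Lemma diag_scale r (a : R[i]) (d : 'rV[R[i]]_r) :
  a *: diag_mx d = diag_mx (a *: d).
Proof. by apply/matrixP => i j; rewrite !mxE mulrnAr. Qed.

Lemma diag_pow r (d : 'rV[R[i]]_r) k :
  (diag_mx d) ^+ k = diag_mx (\row_j (d 0 j ^+ k)).
Proof.
elim: k => [|k IH].
  by rewrite expr0; apply/matrixP => i j; rewrite !mxE expr0.
rewrite exprS IH -mulmxE mulmx_diag; congr diag_mx.
by apply/rowP => j; rewrite !mxE exprS.
Qed.

Lemma expmx_diag r (d : 'rV[R[i]]_r) :
  expmx (diag_mx d) = diag_mx (\row_j cexp (d 0 j)).
Proof.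
rewrite /expmx; apply: cvg_lim; first exact: norm_hausdorff.
apply: cvg_mx_entry => i j.
rewrite !mxE.
have -> : (fun x => series (fun k => (k`!%:R)^-1 *: diag_mx d ^+ k) x i j)
  = (fun x => series (cterm (d 0 i)) x *+ (i == j)).
  apply/funext => N; rewrite /series /= summxE.
  rewrite -sumrMnl; apply: eq_bigr => k _.
  by rewrite diag_pow !mxE mulrnAr.
case: (i == j).
  by under eq_fun do rewrite mulr1n; exact: cexp_cvg.
by under eq_fun do rewrite mulr0n; exact: cvg_cst.
Qed.

Lemma eig_det n (A : 'M[R[i]]_n) (a : R[i]) :
  ~~ eigenvalue (- A) a = (\det (A + a%:M) != 0).
Proof.
rewrite /eigenvalue /eigenspace negbK kermx_eq0 row_free_unit unitmxE unitfE.
by rewrite -opprD -scaleN1r detZ mulf_eq0 signr_eq0.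
Qed.

End MX.

Section Entries.
Local Open Scope classical_set_scope.
Context {K : numFieldType}.

Lemma cvg_affine (a b : K) : (fun h => a + h * b) @ (0 : K)^' --> a.
Proof.
rewrite -[X in _ --> X]addr0; apply: cvgD; first exact: cvg_cst.
rewrite -[X in _ --> X](mul0r b); apply: cvgMl; exact: id_cvg0.
Qed.

Lemma entry_DMD r m (a b : 'rV[K]_r) (B : 'M[K]_(r, m)) i j :
  (diag_mx a *m B *m B^T *m diag_mx b) i j = a 0 i * (B *m B^T) i j * b 0 j.
Proof.
by rewrite -[diag_mx a *m B *m B^T]mulmxA mul_mx_diag mxE mul_diag_mx mxE.
Qed.

Lemma entry_UD n r (U : 'M[K]_(n, r)) (b : 'rV[K]_r) i j :
  (U *m diag_mx b) i j = U i j * b 0 j.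
Proof. by rewrite mul_mx_diag mxE. Qed.

Lemma entry_Sylv r (l : 'rV[K]_r) (P : 'M[K]_r) i j :
  (diag_mx l *m P + P *m diag_mx l) i j = (l 0 i + l 0 j) * P i j.
Proof. by rewrite mxE mul_diag_mx mul_mx_diag !mxE mulrDl [P i j * _]mulrC. Qed.

Lemma entry_Sylv2 n r (A : 'M[K]_n) (Q : 'M[K]_(n, r)) (l : 'rV[K]_r) i j :
  (A *m Q + Q *m diag_mx l) i j = ((A + (l 0 j)%:M) *m col j Q) i 0.
Proof.
rewrite mulmxDl mxE [in RHS]mxE mul_mx_diag mul_scalar_mx !mxE.
by congr (_ + _); [apply: eq_bigr => m _; rewrite mxE | rewrite mulrC].
Qed.

Lemma entry_A_Q n r (A : 'M[K]_n) (Q : 'M[K]_(n, r)) (l : 'rV[K]_r) i j :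
  (A *m Q + Q *m diag_mx l) i j = (A *m Q) i j + Q i j * l 0 j.
Proof. by rewrite [LHS]mxE entry_UD. Qed.

Lemma Ek_diag r (k : 'I_r) :
  ('e_k : 'rV[K]_r)^T *m 'e_k = diag_mx (\row_j (j == k)%:R).
Proof.
rewrite trmx_delta mul_delta_mx; apply/matrixP => i j; rewrite !mxE.
by case: (eqVneq i j) => [->|ij]; rewrite ?mulr1n ?mulr0n ?andbb //;
  case: (eqVneq i k) => [ik|] //; case: (eqVneq j k) => // jk;
  move: ij; rewrite ik jk eqxx.
Qed.

End Entries.

Local Notation CC R := (Num.NumField.sort (R[i] : numFieldType)).
Section CD.
Local Open Scope classical_set_scope.
Lemma row_entry {K : Type} r (f : 'I_r -> K) i : (\row_j f j) 0 i = f i.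
Proof. by rewrite mxE. Qed.

Lemma entry_add {K : zmodType} p q (M N : 'M[K]_(p, q)) i j :
  (M + N) i j = M i j + N i j.
Proof. by rewrite mxE. Qed.
Lemma entry_opp {K : zmodType} p q (M : 'M[K]_(p, q)) i j :
  (- M) i j = - M i j.
Proof. by rewrite mxE. Qed.
Lemma entry_sub {K : zmodType} p q (M N : 'M[K]_(p, q)) i j :
  (M - N) i j = M i j - N i j.
Proof. by rewrite !mxE. Qed.
Lemma entry_scale {K : pzRingType} p q (a : K) (M : 'M[K]_(p, q)) i j :
  (a *: M) i j = a * M i j.
Proof. by rewrite mxE. Qed.

Lemma alg_P {K : fieldType} (li lj di dj h M Ph P0 Ei Ej E0i E0j : K) :
  h != 0 ->
  (li + h * di + (lj + h * dj)) * Ph = - M + Ei * M * Ej ->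
  (li + lj) * P0 = - M + E0i * M * E0j ->
  (li + lj + h * (di + dj)) * (h^-1 * (Ph - P0)) =
  M * (h^-1 * (Ei * Ej - E0i * E0j)) - (di + dj) * P0.
Proof.
move=> h0 e2 e1.
have E2 : M * (Ei * Ej) = (li + h * di + (lj + h * dj)) * Ph + M.
  by rewrite e2; ring.
have E1 : M * (E0i * E0j) = (li + lj) * P0 + M by rewrite e1; ring.
have -> : M * (h^-1 * (Ei * Ej - E0i * E0j)) =
  h^-1 * (M * (Ei * Ej) - M * (E0i * E0j)) by ring.
rewrite E2 E1 -[X in _ = _ - X](mulKf h0).
ring.
Qed.

Lemma entry_dDMD {K : comPzRingType} r m (c a b : 'rV[K]_r) (B : 'M[K]_(r, m)) i j :
  (diag_mx c *m diag_mx a *m B *m B^T *m diag_mx b) i j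
  = c 0 i * a 0 i * (B *m B^T) i j * b 0 j.
Proof.
rewrite mulmx_diag -[diag_mx _ *m B *m B^T]mulmxA mul_mx_diag mxE mul_diag_mx.
by rewrite !mxE.
Qed.

Lemma entry_DMDd {K : comPzRingType} r m (c a b : 'rV[K]_r) (B : 'M[K]_(r, m)) i j :
  (diag_mx a *m B *m B^T *m diag_mx b *m diag_mx c) i j
  = a 0 i * (B *m B^T) i j * b 0 j * c 0 j.
Proof.
rewrite -mulmxA mulmx_diag -[diag_mx _ *m B *m B^T]mulmxA mul_mx_diag mxE.
by rewrite mul_diag_mx !mxE mulrA.
Qed.

Lemma entry_dP {K : pzRingType} r q (c : 'rV[K]_r) (M : 'M[K]_(r, q)) i j :
  (diag_mx c *m M) i j = c 0 i * M i j.
Proof. by rewrite mul_diag_mx mxE. Qed.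

Lemma alg_X {K : comNzRingType} (di dj T M P0 Ei Ej : K) :
  M * (T * di * Ei * Ej + Ei * (T * dj * Ej)) - (di + dj) * P0
  = - (di * P0) - P0 * dj + T * (di * Ei * M * Ej) + T * (Ei * M * Ej * dj).
Proof. ring. Qed.

Lemma alg_P2 {K : fieldType} (lj dj h V U a2 a0 p2 p0 Ej E0 : K) :
  h != 0 ->
  a2 + p2 * (lj + h * dj) = - V + U * Ej ->
  a0 + p0 * lj = - V + U * E0 ->
  h^-1 * (a2 - a0) + h^-1 * (p2 - p0) * (lj + h * dj) =
  U * (h^-1 * (Ej - E0)) - p0 * dj.
Proof.
move=> h0 e2 e1.
have E2 : U * Ej = a2 + p2 * (lj + h * dj) + V by rewrite e2; ring.
have E1 : U * E0 = a0 + p0 * lj + V by rewrite e1; ring.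
have -> : U * (h^-1 * (Ej - E0)) = h^-1 * (U * Ej - U * E0) by ring.
rewrite E2 E1 -[X in _ = _ - X](mulKf h0).
ring.
Qed.

Lemma alg_X2 {K : comNzRingType} (U T dj Ej p : K) :
  U * (T * dj * Ej) - p * dj = - (p * dj) + T * (U * (Ej * dj)).
Proof. ring. Qed.

Lemma entry_UDd {K : comPzRingType} q r (U : 'M[K]_(q, r)) (b c : 'rV[K]_r) i j :
  (U *m diag_mx b *m diag_mx c) i j = U i j * (b 0 j * c 0 j).
Proof. by rewrite -mulmxA mulmx_diag mul_mx_diag !mxE. Qed.

Lemma col_entry {K : Type} q (f : 'I_q -> K) i : (\col_i0 f i0) i 0 = f i.
Proof. by rewrite mxE. Qed.

Lemma cexp_deriv' {R : realType} (T a dd : CC R) :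
  (fun h : CC R => h^-1 * (cexp (T * (a + h * dd)) - cexp (T * a)))
    @ (0 : CC R)^' --> (T * dd) * cexp (T * a).
Proof.
have := cexp_deriv (T * a) (T * dd); apply: cvg_trans.
apply: near_eq_cvg; near=> h; by rewrite [T * (a + _)]mulrDr [T * (h * dd)]mulrCA.
Unshelve. all: by end_near. Qed.
End CD.

Theorem lemma3p1 (R : realType) (n m r : nat)
  (A : 'M[R]_n) (B : 'M[R]_(n, m)) (T : R) (Bt : 'M[R[i]]_(r, m))
  (P : 'rV[R[i]]_r -> 'M[R[i]]_(r, r))
  (P2 : 'rV[R[i]]_r -> 'M[R[i]]_(n, r)) :
  0 < T ->
  let adm := fun lam : 'rV[R[i]]_r =>
    (forall k l : 'I_r, lam 0 k + lam 0 l != 0) /\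
    (forall k : 'I_r, ~~ eigenvalue (- cmx A) (lam 0 k)) in
  let EDT := fun lam : 'rV[R[i]]_r => expmx (T%:C *: diag_mx lam) in
  let EAT := expmx (T%:C *: cmx A) in
  (forall lam, adm lam ->
     diag_mx lam *m P lam + P lam *m diag_mx lam
     = - (Bt *m Bt^T) + EDT lam *m Bt *m Bt^T *m EDT lam) ->
  (forall lam, adm lam ->
     cmx A *m P2 lam + P2 lam *m diag_mx lam
     = - (cmx B *m Bt^T) + EAT *m cmx B *m Bt^T *m EDT lam) ->
  forall lam : 'rV[R[i]]_r, adm lam ->
  forall k : 'I_r,
    let ek : 'rV[R[i]]_r := 'e_k in
    let Ek := ek^T *m ek in
    let X := 'D_ek P lam in
    let X2 := 'D_ek P2 lam in
    derivable P lam ek /\ derivable P2 lam ek /\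
    diag_mx lam *m X + X *m diag_mx lam
      = - (Ek *m P lam) - P lam *m Ek
        + T%:C *: (Ek *m EDT lam *m Bt *m Bt^T *m EDT lam)
        + T%:C *: (EDT lam *m Bt *m Bt^T *m EDT lam *m Ek) /\
    cmx A *m X2 + X2 *m diag_mx lam
      = - (P2 lam *m Ek) + T%:C *: (EAT *m cmx B *m Bt^T *m EDT lam *m Ek).
Proof.
Local Open Scope classical_set_scope.
move=> T0 adm EDT EAT HP HP2 lam Hadm k ek Ek X X2.
have [Hadm1 Hadm2] := Hadm.
have ekE : forall j, ek 0 j = (j == k)%:R by move=> j; rewrite /ek mxE eqxx.
have EkE : Ek = diag_mx (\row_j (j == k)%:R) by rewrite /Ek /ek Ek_diag.
have EDTE : forall l, EDT l = diag_mx (\row_j cexp (T%:C * l 0 j)).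
  move=> l; rewrite /EDT diag_scale expmx_diag; congr diag_mx.
  by apply/rowP => j; rewrite !mxE.
have lamhE : forall (h : R[i]) j,
    (h *: ek + lam) 0 j = lam 0 j + h * (j == k)%:R.
  by move=> h j; rewrite mxE [X in X + _]mxE ekE addrC.
have HNc : forall j a b,
    ((fun h : R[i] => (cmx A + ((h *: ek + lam) 0 j)%:M) a b)
      @ (0 : CC R)^' --> ((cmx A + (lam 0 j)%:M) a b : CC R))%classic.
  move=> j a b.
  have -> : (fun h : R[i] => (cmx A + ((h *: ek + lam) 0 j)%:M) a b) =
     (fun h => (cmx A a b + lam 0 j *+ (a == b)) + h * ((j == k)%:R *+ (a == b))).
    apply/funext => h; rewrite [LHS]mxE [_%:M a b]mxE lamhE.
    by case: (a == b) => /=; [rewrite !mulr1n addrA | rewrite !mulr0n mulr0 !addr0].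
  rewrite [X in _ --> X]mxE [_%:M a b]mxE; exact: cvg_affine.
have Hnear : \forall h \near (0 : CC R)^', adm (h *: ek + lam).
  have H1 : \forall h \near (0 : CC R)^', forall ab : 'I_r * 'I_r,
      (h *: ek + lam) 0 ab.1 + (h *: ek + lam) 0 ab.2 != 0.
    apply: filter_forall => -[a b] /=.
    have HH : \forall h \near (0 : CC R)^',
        (lam 0 a + lam 0 b) + h * ((a == k)%:R + (b == k)%:R) != 0.
      exact: near_neq0 (cvg_affine (lam 0 a + lam 0 b)
        ((a == k)%:R + (b == k)%:R)) (Hadm1 a b).
    apply: filterS HH => h H; rewrite !lamhE.
    suff -> : lam 0 a + h * (a == k)%:R + (lam 0 b + h * (b == k)%:R) =
      lam 0 a + lam 0 b + h * ((a == k)%:R + (b == k)%:R) by [].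
    ring.
  have H2 : \forall h \near (0 : CC R)^', forall j : 'I_r,
      ~~ eigenvalue (- cmx A) ((h *: ek + lam) 0 j).
    apply: filter_forall => j.
    have Hd : ((fun h : R[i] => \det (cmx A + ((h *: ek + lam) 0 j)%:M))
        @ (0 : CC R)^' --> (\det (cmx A + (lam 0 j)%:M) : CC R))%classic.
      by apply: cvg_det => a b; exact: HNc.
    have HH : \forall h \near (0 : CC R)^',
        \det (cmx A + ((h *: ek + lam) 0 j)%:M) != 0.
      by apply: near_neq0 Hd _; rewrite -eig_det; exact: Hadm2.
    by apply: filterS HH => h; rewrite eig_det.
  apply: filterS2 H1 H2 => h h1 h2; split; last exact: h2.
  by move=> a b; exact: (h1 (a, b)).
have HPe : forall l i j, adm l -> (l 0 i + l 0 j) * P l i j = - (Bt *m Bt^T) i j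
    + cexp (T%:C * l 0 i) * (Bt *m Bt^T) i j * cexp (T%:C * l 0 j).
  move=> l i j Hl.
  rewrite -entry_Sylv HP // EDTE entry_add entry_opp entry_DMD.
  by rewrite !row_entry.
pose d := fun i : 'I_r => ((i == k)%:R : R[i]).
pose Xm : 'M[CC R]_r := \matrix_(i, j)
  (((Bt *m Bt^T) i j * ((T%:C * d i) * cexp (T%:C * lam 0 i) * cexp (T%:C * lam 0 j)
      + cexp (T%:C * lam 0 i) * ((T%:C * d j) * cexp (T%:C * lam 0 j)))
    - (d i + d j) * P lam i j) / (lam 0 i + lam 0 j)).
have HX : ((fun h : CC R => h^-1 *: ((P \o shift lam) (h *: ek) - P lam))
    @ (0 : CC R)^' --> Xm)%classic.
  apply: cvg_mx_entry => i j.
  rewrite mxE.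
  have -> : (fun h : CC R => (h^-1 *: ((P \o shift lam) (h *: ek) - P lam)) i j)
     = (fun h => h^-1 * (P (h *: ek + lam) i j - P lam i j)).
    by apply/funext => h; rewrite !mxE.
  apply: (@lim_solve _ (fun h => (lam 0 i + lam 0 j) + h * (d i + d j)) _
     (fun h => (Bt *m Bt^T) i j * (h^-1 * (cexp (T%:C * (lam 0 i + h * d i))
        * cexp (T%:C * (lam 0 j + h * d j))
        - cexp (T%:C * lam 0 i) * cexp (T%:C * lam 0 j)))
        - (d i + d j) * P lam i j)).
  - exact: cvg_affine.
  - exact: Hadm1.
  - apply: cvgB; last exact: cvg_cst.
    apply: cvgMr; apply: der_mul; exact: cexp_deriv'.
  - apply: filterS2 Hnear (nbhs_dnbhs_neq (0 : CC R)) => h Hh h0.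
    have e1 := HPe lam i j Hadm.
    have e2 := HPe _ i j Hh.
    rewrite !lamhE in e2.
    exact: alg_P h0 e2 e1.
have dP : derivable P lam ek by apply/cvg_ex; exists Xm.
have XE : X = Xm by rewrite /X; exact: (cvg_lim (@norm_hausdorff _ _) HX).
have SX : diag_mx lam *m X + X *m diag_mx lam
      = - (Ek *m P lam) - P lam *m Ek
        + T%:C *: (Ek *m EDT lam *m Bt *m Bt^T *m EDT lam)
        + T%:C *: (EDT lam *m Bt *m Bt^T *m EDT lam *m Ek).
  rewrite XE EkE !EDTE; apply/matrixP => i j.
  rewrite entry_Sylv !entry_add ?entry_sub !entry_opp !entry_scale.
  rewrite entry_dDMD entry_DMDd entry_dP entry_UD !row_entry /Xm mxE /d.
  rewrite [LHS]mulrC divfK; last exact: Hadm1.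
  exact: alg_X.
have HPe2 : forall l i j, adm l ->
    (cmx A *m P2 l) i j + P2 l i j * l 0 j = - (cmx B *m Bt^T) i j
    + (EAT *m cmx B *m Bt^T) i j * cexp (T%:C * l 0 j).
  move=> l i j Hl; rewrite -entry_A_Q.
  apply: (etrans (congr1 (fun Z : 'M[R[i]]_(n, r) => Z i j) (HP2 _ Hl))).
  by rewrite EDTE entry_add entry_opp entry_UD row_entry.
have HQ1 : forall (h : R[i]) l i j,
    (cmx A *m (h^-1 *: (P2 l - P2 lam))) i j
    = h^-1 * ((cmx A *m P2 l) i j - (cmx A *m P2 lam) i j).
  by move=> h l i j; rewrite -scalemxAr entry_scale mulmxBr entry_sub.
have HQ2 : forall (h : R[i]) l i j,
    (h^-1 *: (P2 l - P2 lam)) i j = h^-1 * (P2 l i j - P2 lam i j).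
  by move=> h l i j; rewrite entry_scale entry_sub.
pose N0 := fun j : 'I_r => cmx A + (lam 0 j)%:M.
pose g0 := fun j : 'I_r => \col_i0 ((EAT *m cmx B *m Bt^T) i0 j
    * ((T%:C * d j) * cexp (T%:C * lam 0 j)) - P2 lam i0 j * d j).
pose X2m : 'M[CC R]_(n, r) := \matrix_(i, j)
  (((\det (N0 j))^-1 *: (\adj (N0 j) *m g0 j)) i 0).
have HX2 : ((fun h : CC R => h^-1 *: ((P2 \o shift lam) (h *: ek) - P2 lam))
    @ (0 : CC R)^' --> X2m)%classic.
  apply: cvg_mx_entry => i j.
  rewrite mxE.
  have -> : (fun h : CC R => (h^-1 *: ((P2 \o shift lam) (h *: ek) - P2 lam)) i j)
     = (fun h => (col j (h^-1 *: (P2 (h *: ek + lam) - P2 lam))) i 0).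
    by apply/funext => h; rewrite !mxE.
  apply: (@lim_solve_mx _ n (fun h => cmx A + ((h *: ek + lam) 0 j)%:M)
    (fun h => col j (h^-1 *: (P2 (h *: ek + lam) - P2 lam)))
    (fun h => \col_i0 ((EAT *m cmx B *m Bt^T) i0 j
        * (h^-1 * (cexp (T%:C * (lam 0 j + h * d j)) - cexp (T%:C * lam 0 j)))
        - P2 lam i0 j * d j))
    (N0 j) (g0 j)).
  - exact: HNc.
  - rewrite -eig_det; exact: Hadm2.
  - move=> i0; rewrite /g0 mxE.
    have -> : (fun h : CC R => (\col_i1 ((EAT *m cmx B *m Bt^T) i1 j
        * (h^-1 * (cexp (T%:C * (lam 0 j + h * d j)) - cexp (T%:C * lam 0 j)))
        - P2 lam i1 j * d j)) i0 0) =
      (fun h : CC R => (EAT *m cmx B *m Bt^T) i0 j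
        * (h^-1 * (cexp (T%:C * (lam 0 j + h * d j)) - cexp (T%:C * lam 0 j)))
        - P2 lam i0 j * d j).
      by apply/funext => h; rewrite mxE.
    apply: cvgB; last exact: cvg_cst.
    apply: cvgMr; exact: cexp_deriv'.
  - apply: filterS2 Hnear (nbhs_dnbhs_neq (0 : CC R)) => h Hh h0.
    apply/matrixP => i0 z; rewrite (ord1 z) -entry_Sylv2 entry_A_Q HQ1 HQ2.
    have e1 := HPe2 lam i0 j Hadm.
    have e2 := HPe2 _ i0 j Hh.
    rewrite !lamhE in e2 *.
    rewrite col_entry.
    exact: alg_P2 h0 e2 e1.
have dP2 : derivable P2 lam ek by apply/cvg_ex; exists X2m.
have X2E : X2 = X2m by rewrite /X2; exact: (cvg_lim (@norm_hausdorff _ _) HX2).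
have SX2 : cmx A *m X2 + X2 *m diag_mx lam
      = - (P2 lam *m Ek) + T%:C *: (EAT *m cmx B *m Bt^T *m EDT lam *m Ek).
  rewrite X2E EkE !EDTE; apply/matrixP => i j.
  have colX : col j X2m = (\det (N0 j))^-1 *: (\adj (N0 j) *m g0 j).
    by apply/matrixP => a z; rewrite (ord1 z) mxE /X2m mxE.
  rewrite entry_Sylv2 colX -scalemxAr mulmxA mul_mx_adj mul_scalar_mx scalerA.
  rewrite mulVf ?scale1r; last by rewrite -eig_det; exact: Hadm2.
  rewrite entry_add entry_opp entry_scale entry_UD entry_UDd !row_entry /g0 col_entry /d.
  exact: alg_X2.
by split; [exact: dP | split; [exact: dP2 | split; [exact: SX | exact: SX2]]].
Qed.
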